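(* Let $\theta(q,x):=\sum_{j=0}^{\infty}q^{j(j+1)/2}x^j$. For every $q\in(0,0.5]$, the function $x\mapsto\theta(q,x)$ has no zeros in the closed rectangle $\Delta:=\{x\in\mathbb{C}:\ -3\leq\mathrm{Re}\,x\leq 0,\ -3\leq\mathrm{Im}\,x\leq 3\}$. *)

(* Defs.v *)
From Stdlib Require Import Reals.
From Coquelicot Require Import Coquelicot.
Open Scope R_scope.

Definition theta_term (q : R) (x : C) (j : nat) : C :=
  Cmult (RtoC (q ^ (Nat.div (j * (j + 1)) 2))) (Cpow x j).

(* Main.v *)
Require Import Defs.
From Stdlib Require Import Reals ZArith Bool Lia Lra.
From Coquelicot Require Import Coquelicot.
Open Scope R_scope.

Definition I := (Z * Z)%type.
Definition Pb : Z := 40%Z.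
Definition Dn : Z := (2 ^ Pb)%Z.
Definition zmin (a b : Z) := if Z.leb a b then a else b.
Definition zmax (a b : Z) := if Z.leb a b then b else a.
Definition iadd (a b : I) : I := ((fst a + fst b)%Z, (snd a + snd b)%Z).
Definition isub (a b : I) : I := ((fst a - snd b)%Z, (snd a - fst b)%Z).
Definition fdiv (a : Z) := Z.shiftr a Pb.
Definition cdiv (a : Z) := (- (Z.shiftr (- a) Pb))%Z.
Definition imul (a b : I) : I :=
  let p1 := (fst a * fst b)%Z in let p2 := (fst a * snd b)%Z in
  let p3 := (snd a * fst b)%Z in let p4 := (snd a * snd b)%Z in
  (fdiv (zmin (zmin p1 p2) (zmin p3 p4)), cdiv (zmax (zmax p1 p2) (zmax p3 p4))).
Definition CI := (I * I)%type.
Definition cmul (X Y : CI) : CI :=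
  (isub (imul (fst X) (fst Y)) (imul (snd X) (snd Y)),
   iadd (imul (fst X) (snd Y)) (imul (snd X) (fst Y))).
Definition eps : Z := (Dn / 25 + 1)%Z.
Definition base : CI := (((Dn - eps)%Z, (Dn + eps)%Z), ((- eps)%Z, eps)).
Definition hstep (Qk : I) (X : CI) (H : CI) : CI :=
  let Y := (imul Qk (fst X), imul Qk (snd X)) in
  let T := cmul Y H in
  (iadd (Dn, Dn) (fst T), snd T).
Fixpoint ihor (qi : I) (X : CI) (P : I) (n : nat) : CI :=
  match n with O => base | S n => hstep P X (ihor qi X (imul qi P) n) end.
Definition excl0 (H : CI) : bool :=
  orb (orb (Z.ltb 0 (fst (fst H))) (Z.ltb (snd (fst H)) 0))
      (orb (Z.ltb 0 (fst (snd H))) (Z.ltb (snd (snd H)) 0)).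
Definition Nt := 7%nat.
Definition chk (qi ui vi : I) : bool := excl0 (ihor qi (ui, vi) qi Nt).
Definition mid (a : I) : Z := ((fst a + snd a) / 2)%Z.
Definition wid (a : I) : Z := (snd a - fst a)%Z.
Fixpoint go (fuel : nat) (qi ui vi : I) : bool :=
  if chk qi ui vi then true else
  match fuel with O => false | S f =>
   if andb (Z.leb (wid ui) (wid qi * 8)) (Z.leb (wid vi) (wid qi * 8)) then
     (if go f (fst qi, mid qi) ui vi then go f (mid qi, snd qi) ui vi else false)
   else if Z.leb (wid vi) (wid ui) then
     (if go f qi (fst ui, mid ui) vi then go f qi (mid ui, snd ui) vi else false)
   else (if go f qi ui (fst vi, mid vi) then go f qi ui (mid vi, snd vi) else false)
  end.
Definition Dh : Z := (2 ^ 39)%Z.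
Lemma Dn_Dh : Dn = (2 * Dh)%Z. Proof. reflexivity. Qed.
Lemma Dn_pos : (0 < Dn)%Z. Proof. reflexivity. Qed.
Lemma eps_ok : (Dn <= 25 * eps)%Z. Proof. vm_compute. discriminate. Qed.

Definition D : R := IZR Dn.
Lemma D_pos : 0 < D. Proof. unfold D; apply IZR_lt; exact Dn_pos. Qed.
Definition zr (z : Z) : R := IZR z / D.
Definition inI (r : R) (a : I) := zr (fst a) <= r <= zr (snd a).
Definition inC (c : C) (X : CI) := inI (fst c) (fst X) /\ inI (snd c) (snd X).

Lemma zr_plus a b : zr (a + b) = zr a + zr b.
Proof. unfold zr; rewrite plus_IZR; field; generalize D_pos; lra. Qed.
Lemma zr_minus a b : zr (a - b) = zr a - zr b.
Proof. unfold zr; rewrite minus_IZR; field; generalize D_pos; lra. Qed.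
Lemma zr_opp a : zr (- a) = - zr a.
Proof. unfold zr; rewrite opp_IZR; field; generalize D_pos; lra. Qed.
Lemma zr_le a b : (a <= b)%Z -> zr a <= zr b.
Proof. intro h; unfold zr; apply Rmult_le_compat_r.
  left; apply Rinv_0_lt_compat, D_pos. apply IZR_le; exact h. Qed.
Lemma zr_Dn : zr Dn = 1.
Proof. unfold zr; fold D; field; generalize D_pos; lra. Qed.

Lemma iadd_ok x y a b : inI x a -> inI y b -> inI (x + y) (iadd a b).
Proof. unfold inI, iadd; simpl; rewrite !zr_plus; lra. Qed.
Lemma isub_ok x y a b : inI x a -> inI y b -> inI (x - y) (isub a b).
Proof. unfold inI, isub; simpl; rewrite !zr_minus; lra. Qed.

Lemma fdiv_ok p : zr (fdiv p) <= IZR p / (D * D).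
Proof.
  unfold fdiv, zr. rewrite Z.shiftr_div_pow2 by (unfold Pb; lia). fold Dn.
  assert (h := Z.mul_div_le p Dn Dn_pos).
  apply IZR_le in h. rewrite mult_IZR in h. fold D in h.
  assert (hD := D_pos).
  apply Rmult_le_reg_r with (D * D). nra.
  replace (IZR (p / Dn) / D * (D * D)) with (D * IZR (p / Dn)) by (field; lra).
  replace (IZR p / (D * D) * (D * D)) with (IZR p) by (field; lra). exact h.
Qed.
Lemma cdiv_ok p : IZR p / (D * D) <= zr (cdiv p).
Proof.
  unfold cdiv. rewrite zr_opp. fold (fdiv (- p)).
  generalize (fdiv_ok (- p)). rewrite opp_IZR.
  intro h. replace (- IZR p / (D * D)) with (- (IZR p / (D * D))) in h.
  lra. field. generalize D_pos; lra.
Qed.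

Lemma corner x y a b c d : a <= x <= b -> c <= y <= d ->
  (a * c <= x * y \/ a * d <= x * y \/ b * c <= x * y \/ b * d <= x * y) /\
  (x * y <= a * c \/ x * y <= a * d \/ x * y <= b * c \/ x * y <= b * d).
Proof.
  intros hx hy. split.
  - destruct (Rle_or_lt 0 y).
    + destruct (Rle_or_lt 0 a).
      * left; nra.
      * right; left; nra.
    + destruct (Rle_or_lt 0 b).
      * right; right; left; nra.
      * right; right; right; nra.
  - destruct (Rle_or_lt 0 y).
    + destruct (Rle_or_lt 0 b).
      * right; right; right; nra.
      * right; right; left; nra.
    + destruct (Rle_or_lt 0 a).
      * right; left; nra.
      * left; nra.
Qed.

Lemma zmin_l a b : (zmin a b <= a)%Z.
Proof. unfold zmin; destruct (Z.leb_spec a b); lia. Qed.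
Lemma zmin_r a b : (zmin a b <= b)%Z.
Proof. unfold zmin; destruct (Z.leb_spec a b); lia. Qed.
Lemma zmax_l a b : (a <= zmax a b)%Z.
Proof. unfold zmax; destruct (Z.leb_spec a b); lia. Qed.
Lemma zmax_r a b : (b <= zmax a b)%Z.
Proof. unfold zmax; destruct (Z.leb_spec a b); lia. Qed.

Lemma zr_mul a b : zr a * zr b = IZR (a * b) / (D * D).
Proof. unfold zr; rewrite mult_IZR; field; generalize D_pos; lra. Qed.

Lemma divDD_le p1 p2 : (p1 <= p2)%Z -> IZR p1 / (D * D) <= IZR p2 / (D * D).
Proof. intro h. apply Rmult_le_compat_r. left; apply Rinv_0_lt_compat.
  generalize D_pos; nra. apply IZR_le; exact h. Qed.

Lemma imul_ok x y a b : inI x a -> inI y b -> inI (x * y) (imul a b).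
Proof.
  destruct a as [a1 a2], b as [b1 b2]; unfold inI, imul; simpl; intros hx hy.
  destruct (corner x y _ _ _ _ hx hy) as [hl hu].
  rewrite !zr_mul in hl, hu. split.
  - eapply Rle_trans. apply fdiv_ok.
    destruct hl as [h|[h|[h|h]]]; (eapply Rle_trans; [|exact h]); apply divDD_le.
    + eapply Z.le_trans; [apply zmin_l|apply zmin_l].
    + eapply Z.le_trans; [apply zmin_l|apply zmin_r].
    + eapply Z.le_trans; [apply zmin_r|apply zmin_l].
    + eapply Z.le_trans; [apply zmin_r|apply zmin_r].
  - eapply Rle_trans; [|apply cdiv_ok].
    destruct hu as [h|[h|[h|h]]]; (eapply Rle_trans; [exact h|]); apply divDD_le.
    + eapply Z.le_trans; [|apply zmax_l]; apply zmax_l.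
    + eapply Z.le_trans; [|apply zmax_l]; apply zmax_r.
    + eapply Z.le_trans; [|apply zmax_r]; apply zmax_l.
    + eapply Z.le_trans; [|apply zmax_r]; apply zmax_r.
Qed.

Lemma cmul_ok x y X Y : inC x X -> inC y Y -> inC (x * y)%C (cmul X Y).
Proof.
  destruct x as [x1 x2], y as [y1 y2]; unfold inC, cmul; simpl; intros [h1 h2] [h3 h4].
  split.
  - apply isub_ok; apply imul_ok; assumption.
  - apply iadd_ok; apply imul_ok; assumption.
Qed.

Lemma hstep_ok c x L Qk X H : inI c Qk -> inC x X -> inC L H ->
  inC (1 + (RtoC c * x) * L)%C (hstep Qk X H).
Proof.
  intros hc hx hL. unfold hstep.
  assert (hy : inC (RtoC c * x)%C (imul Qk (fst X), imul Qk (snd X))).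
  { destruct x as [u v]; destruct hx as [hu hv]; unfold inC; simpl.
    replace (c * u - 0 * v) with (c * u) by ring.
    replace (c * v + 0 * u) with (c * v) by ring.
    split; apply imul_ok; assumption. }
  generalize (cmul_ok _ _ _ _ hy hL). set (T := cmul _ _). set (z := ((RtoC c * x) * L)%C).
  destruct z as [z1 z2]. unfold inC; simpl. intros [h1 h2]. split.
  - apply iadd_ok; [|exact h1]. unfold inI; simpl; rewrite zr_Dn; lra.
  - replace (0 + z2) with z2 by ring. exact h2.
Qed.
Definition ex (k m : nat) : nat := (Nat.div (m * (m + 1)) 2 + k * m)%nat.
Definition tm (q : R) (x : C) (k m : nat) : C := (RtoC (q ^ ex k m) * Cpow x m)%C.

Lemma tri_S m : Nat.div (S m * (S m + 1)) 2 = (Nat.div (m * (m + 1)) 2 + S m)%nat.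
Proof.
  replace (S m * (S m + 1))%nat with (m * (m + 1) + S m * 2)%nat by lia.
  apply Nat.div_add; lia.
Qed.
Lemma tri_ge m : (m <= Nat.div (m * (m + 1)) 2)%nat.
Proof. induction m. simpl; lia. rewrite tri_S; lia. Qed.

Lemma ex_S k m : ex k (S m) = (S k + ex (S k) m)%nat.
Proof. unfold ex. rewrite tri_S. lia. Qed.
Lemma ex_ge k m : (S k * m <= ex k m)%nat.
Proof. unfold ex. generalize (tri_ge m). lia. Qed.

Lemma C_eq (a b : C) : fst a = fst b -> snd a = snd b -> a = b.
Proof. destruct a, b; simpl; intros; subst; reflexivity. Qed.

Lemma tm_S q x k m : tm q x k (S m) = ((RtoC (q ^ S k) * x) * tm q x (S k) m)%C.
Proof.
  unfold tm. rewrite ex_S, pow_add. simpl Cpow.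
  destruct (Cpow x m) as [a b]; destruct x as [u v]. apply C_eq; simpl; ring.
Qed.

Lemma tm_0 q x k : tm q x k 0 = RtoC 1.
Proof. unfold tm, ex. simpl. rewrite Nat.mul_0_r; apply C_eq; simpl; ring. Qed.

Lemma step_series q x k l : is_series (tm q x (S k)) l ->
  is_series (tm q x k) (1 + (RtoC (q ^ S k) * x) * l)%C.
Proof.
  intro h. apply is_series_decr_1.
  apply (is_series_scal (RtoC (q ^ S k) * x)%C) in h.
  match goal with |- is_series _ ?L => replace L with
    (scal (RtoC (q ^ S k) * x)%C l) end.
  - eapply is_series_ext; [|exact h]. intro n. rewrite tm_S. reflexivity.
  - rewrite tm_0. change (scal (RtoC (q ^ S k) * x)%C l) with ((RtoC (q ^ S k) * x) * l)%C.
    match goal with |- _ = ?L => change L with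
      ((1 + RtoC (q ^ S k) * x * l) + (- RtoC 1))%C end.
    set (w := (RtoC (q ^ S k) * x * l)%C). destruct w as [w1 w2].
    apply C_eq; simpl; ring.
Qed.
Lemma pow_le_one q n : 0 <= q <= 1 -> q ^ n <= 1.
Proof. intro h. rewrite <- (pow1 n). apply pow_incr; lra. Qed.

Lemma base_series q x k : 0 <= q <= 1/2 -> Cmod x <= 5 -> (7 <= k)%nat ->
  exists T, is_series (tm q x k) (1 + T)%C /\ Cmod T <= 5/128.
Proof.
  intros hq hx hk.
  set (r := q ^ S k * Cmod x).
  assert (hqk : 0 <= q ^ S k <= 1/256).
  { split. apply pow_le; lra.
    apply Rle_trans with ((1/2) ^ S k). apply pow_incr; lra.
    replace (S k) with (8 + (k - 7))%nat by lia. rewrite pow_add.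
    assert ((1/2) ^ (k - 7) <= 1) by (apply pow_le_one; lra).
    assert (0 <= (1/2) ^ (k - 7)) by (apply pow_le; lra).
    simpl (_ ^ 8). nra. }
  assert (hr0 : 0 <= r) by (unfold r; generalize (Cmod_ge_0 x); nra).
  assert (hr : r <= 5/256) by (unfold r; generalize (Cmod_ge_0 x); nra).
  set (a := fun m => tm q x k (S m)).
  assert (bnd : forall m, Cmod (a m) <= r * (1/2) ^ m).
  { intro m. unfold a, tm. rewrite Cmod_mult, Cmod_R, Cmod_pow.
    rewrite Rabs_pos_eq by (apply pow_le; lra).
    destruct (Nat.le_exists_sub _ _ (ex_ge k (S m))) as [d [hd _]].
    rewrite hd, pow_add.
    assert (q ^ d <= 1) by (apply pow_le_one; lra).
    assert (0 <= q ^ d) by (apply pow_le; lra).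
    assert (0 <= q ^ (S k * S m)) by (apply pow_le; lra).
    assert (0 <= Cmod x ^ S m) by (apply pow_le; apply Cmod_ge_0).
    apply Rle_trans with (q ^ (S k * S m) * Cmod x ^ S m).
    apply Rmult_le_compat_r. assumption. nra.
    rewrite pow_mult, <- Rpow_mult_distr. fold r.
    simpl (r ^ S m). apply Rmult_le_compat_l. exact hr0.
    apply pow_incr; lra. }
  assert (exs : ex_series a).
  { apply (ex_series_le (K := C_AbsRing) (V := C_CompleteNormedModule) a (fun m => r * (1/2) ^ m)).
    - intro n. apply bnd.
    - apply (ex_series_ext (fun n => scal r ((1/2) ^ n))). reflexivity.
      apply (ex_series_scal (K := R_AbsRing) (V := R_NormedModule)). apply ex_series_geom. rewrite Rabs_pos_eq; lra. }
  destruct exs as [T hT].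
  assert (ps : forall n, Cmod (sum_n a n) <= 2 * r - r * (1/2) ^ n).
  { induction n.
    - rewrite sum_O. generalize (bnd 0%nat). simpl. lra.
    - rewrite sum_Sn. change (plus (sum_n a n) (a (S n))) with (sum_n a n + a (S n))%C.
      eapply Rle_trans. apply Cmod_triangle. generalize (bnd (S n)). simpl. lra. }
  assert (hT2 : Cmod T <= 2 * r).
  { assert (h := filterlim_le (F := eventually) (fun n => Cmod (sum_n a n)) (fun _ => 2 * r)
              (Cmod T) (2 * r)).
    simpl in h. apply h.
    - exists 0%nat. intros n _. generalize (ps n). assert (0 <= r * (1/2) ^ n).
      apply Rmult_le_pos; [lra| apply pow_le; lra]. lra.
    - eapply filterlim_comp. exact hT. apply (filterlim_norm (K := C_AbsRing) T).
    - apply filterlim_const. }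
  exists T. split; [|lra].
  apply is_series_decr_1.
  match goal with |- is_series _ ?L => replace L with T end.
  exact hT.
  rewrite tm_0. destruct T as [t1 t2]. apply C_eq; simpl; ring.
Qed.

Lemma zr_mulc c z : zr (c * z) = IZR c * zr z.
Proof. unfold zr; rewrite mult_IZR; field; generalize D_pos; lra. Qed.
Lemma zr_pos a : (0 < a)%Z -> 0 < zr a.
Proof. intro h; unfold zr; apply Rdiv_lt_0_compat; [apply IZR_lt; exact h|exact D_pos]. Qed.
Lemma zr_neg a : (a < 0)%Z -> zr a < 0.
Proof. intro h; unfold zr. apply IZR_lt in h.
  assert (0 < / D) by (apply Rinv_0_lt_compat, D_pos). unfold Rdiv; nra. Qed.
Lemma zr_eps : 1/25 <= zr eps.
Proof. assert (h := zr_le _ _ eps_ok). rewrite zr_Dn, zr_mulc in h. lra. Qed.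

Lemma abs_bounds t c : Rabs t <= c -> - c <= t <= c.
Proof. intro h. generalize (Rle_abs t) (Rle_abs (- t)). rewrite Rabs_Ropp. lra. Qed.

Lemma ihor_ok q x qi X : inI q qi -> 0 <= q <= 1/2 -> Cmod x <= 5 ->
  forall n k P, (7 <= k + n)%nat -> inI (q ^ S k) P -> inC x X ->
  exists L, is_series (tm q x k) L /\ inC L (ihor qi X P n).
Proof.
  intros hqi hq hx. induction n; intros k P hk hP hX.
  - simpl. destruct (base_series q x k hq hx ltac:(lia)) as [T [hs hT]].
    exists (1 + T)%C. split; [exact hs|].
    assert (hm := Rmax_Cmod T).
    assert (h1 : Rabs (fst T) <= 5/128) by (generalize (Rmax_l (Rabs (fst T)) (Rabs (snd T))); lra).
    assert (h2 : Rabs (snd T) <= 5/128) by (generalize (Rmax_r (Rabs (fst T)) (Rabs (snd T))); lra).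
    apply abs_bounds in h1; apply abs_bounds in h2.
    generalize zr_eps; intro he.
    destruct T as [t1 t2]. unfold inC, inI, base; cbn [fst snd Cplus RtoC] in *.
    rewrite zr_minus, zr_plus, zr_opp, zr_Dn. lra.
  - simpl. assert (hP' : inI (q ^ S (S k)) (imul qi P)).
    { change (q ^ S (S k)) with (q * q ^ S k). apply imul_ok; assumption. }
    destruct (IHn (S k) (imul qi P) ltac:(lia) hP' hX) as [L [hs hL]].
    exists (1 + RtoC (q ^ S k) * x * L)%C. split.
    + apply step_series; exact hs.
    + apply hstep_ok; assumption.
Qed.

Lemma chk_ok q u v qi ui vi : chk qi ui vi = true -> inI q qi -> inI u ui -> inI v vi ->
  0 <= q <= 1/2 -> Cmod (u, v) <= 5 ->
  exists l : C, is_series (theta_term q (u, v)) l /\ l <> RtoC 0.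
Proof.
  intros hc hq hu hv hq2 hx.
  assert (hq1 : inI (q ^ 1) qi) by (rewrite pow_1; exact hq).
  assert (hX : inC (u, v) (ui, vi)) by (split; assumption).
  destruct (ihor_ok q (u, v) qi (ui, vi) hq hq2 hx Nt 0 qi ltac:(unfold Nt; lia) hq1 hX)
    as [L [hs hL]].
  exists L. split.
  - eapply is_series_ext; [|exact hs]. intro n. unfold tm, theta_term, ex.
    rewrite Nat.mul_0_l, Nat.add_0_r. reflexivity.
  - unfold chk in hc. revert hL hc. generalize (ihor qi (ui, vi) qi Nt).
    intros [[a b] [c d]] hL hc hz. subst L. unfold excl0 in hc; simpl in hc.
    destruct hL as [[h1 h2] [h3 h4]]; simpl in *.
    repeat rewrite orb_true_iff in hc. rewrite !Z.ltb_lt in hc.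
    destruct hc as [[h|h]|[h|h]].
    + generalize (zr_pos _ h); lra.
    + generalize (zr_neg _ h); lra.
    + generalize (zr_pos _ h); lra.
    + generalize (zr_neg _ h); lra.
Qed.

Lemma split_ok r a m : inI r a -> inI r (fst a, m) \/ inI r (m, snd a).
Proof. unfold inI; simpl; intro h. destruct (Rle_or_lt r (zr m)); [left|right]; lra. Qed.

Lemma go_S f qi ui vi : go (S f) qi ui vi =
  if chk qi ui vi then true else
   if andb (Z.leb (wid ui) (wid qi * 8)) (Z.leb (wid vi) (wid qi * 8)) then
     (if go f (fst qi, mid qi) ui vi then go f (mid qi, snd qi) ui vi else false)
   else if Z.leb (wid vi) (wid ui) then
     (if go f qi (fst ui, mid ui) vi then go f qi (mid ui, snd ui) vi else false)
   else (if go f qi ui (fst vi, mid vi) then go f qi ui (mid vi, snd vi) else false).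
Proof. reflexivity. Qed.
Lemma go_0 qi ui vi : go 0 qi ui vi = if chk qi ui vi then true else false.
Proof. reflexivity. Qed.

Lemma go_ok q u v : 0 <= q <= 1/2 -> Cmod (u, v) <= 5 ->
  forall fuel qi ui vi, go fuel qi ui vi = true -> inI q qi -> inI u ui -> inI v vi ->
  exists l : C, is_series (theta_term q (u, v)) l /\ l <> RtoC 0.
Proof.
  intros hq hx. induction fuel; intros qi ui vi hg hqi hui hvi;
    [rewrite go_0 in hg | rewrite go_S in hg];
    destruct (chk qi ui vi) eqn:E; try (eapply chk_ok; eassumption); try discriminate.
  destruct (andb _ _).
  - destruct (go fuel (fst qi, mid qi) ui vi) eqn:E1; [|discriminate].
    destruct (split_ok _ _ (mid qi) hqi); [eapply (IHfuel _ _ _ E1) | eapply (IHfuel _ _ _ hg)]; eassumption.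
  - destruct (Z.leb _ _).
    + destruct (go fuel qi (fst ui, mid ui) vi) eqn:E1; [|discriminate].
      destruct (split_ok _ _ (mid ui) hui); [eapply (IHfuel _ _ _ E1) | eapply (IHfuel _ _ _ hg)]; eassumption.
    + destruct (go fuel qi ui (fst vi, mid vi)) eqn:E1; [|discriminate].
      destruct (split_ok _ _ (mid vi) hvi); [eapply (IHfuel _ _ _ E1) | eapply (IHfuel _ _ _ hg)]; eassumption.
Qed.

Lemma go_true : go 30 (0%Z, Dh) ((-3 * Dn)%Z, 0%Z) ((-3 * Dn)%Z, (3 * Dn)%Z) = true.
Proof. vm_compute. reflexivity. Qed.

Theorem proposition2 (q : R) (hq0 : 0 < q) (hq1 : q <= 1/2) (x : C)
  (hre : -3 <= Re x <= 0) (him : -3 <= Im x <= 3) :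
  exists l : C, is_series (theta_term q x) l /\ l <> RtoC 0.
Proof.
  destruct x as [u v]. unfold Re, Im in *; simpl in *.
  assert (hx : Cmod (u, v) <= 5).
  { unfold Cmod; simpl. rewrite <- (sqrt_pow2 5) by lra. apply sqrt_le_1_alt. nra. }
  assert (hD : zr Dh = 1/2).
  { generalize zr_Dn. rewrite Dn_Dh, zr_mulc. lra. }
  assert (h3 : zr (-3 * Dn) = -3) by (rewrite zr_mulc, zr_Dn; ring).
  assert (h3' : zr (3 * Dn) = 3) by (rewrite zr_mulc, zr_Dn; ring).
  assert (h0 : zr 0 = 0) by (unfold zr; simpl; field; generalize D_pos; lra).
  apply (go_ok q u v ltac:(lra) hx 30 _ _ _ go_true); unfold inI; cbn [fst snd];
    rewrite ?hD, ?h3, ?h3', ?h0; lra.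
Qed.
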